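(* Let $L$ be the graph obtained from the line graph $L(K_{5,6})$ of the complete bipartite graph $K_{5,6}$ by adding, for every edge $uv$ of $L(K_{5,6})$, a new vertex adjacent exactly to $u$ and $v$. Let $L\overline{L}$ be the disjoint union of $L$ and its complement $\overline L$. Then $L\overline{L}$ is $\cap$-triangle.
   Context: A graph $G$ is triangle if for every maximal stable set $S$ of $G$ and every edge $uv$ of $G$ with $u,v\notin S$, there is $s\in S$ adjacent to both $u$ and $v$. A graph is $\cap$-triangle if both it and its complement are triangle. *)

(* Defs.v *)
From mathcomp Require Import all_boot.
Set Implicit Arguments. Unset Strict Implicit. Unset Printing Implicit Defensive.

(* A simple graph is a finite type T with a symmetric irreflexive relation. *)

Definition stable (T : finType) (e : rel T) (S : {set T}) : Prop :=
  forall x y, x \in S -> y \in S -> ~~ e x y.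

Definition maximal_stable (T : finType) (e : rel T) (S : {set T}) : Prop :=
  stable e S /\ (forall S' : {set T}, stable e S' -> S \subset S' -> S' = S).

Definition triangle (T : finType) (e : rel T) : Prop :=
  forall S : {set T}, maximal_stable e S ->
  forall u v, e u v -> u \notin S -> v \notin S ->
  exists2 s, s \in S & e s u && e s v.

Definition compl_rel (T : finType) (e : rel T) : rel T :=
  fun x y => (x != y) && ~~ e x y.

Definition cap_triangle (T : finType) (e : rel T) : Prop :=
  triangle e /\ triangle (compl_rel e).

Definition union_rel (T1 T2 : finType) (e1 : rel T1) (e2 : rel T2)
  : rel (T1 + T2)%type :=
  fun x y => match x, y with
  | inl a, inl b => e1 a b
  | inr a, inr b => e2 a b
  | _, _ => false
  end.

(* Line graph of K_{5,6}: vertices are the edges (i,j) of K_{5,6},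
   adjacent iff distinct and sharing an endpoint. *)
Definition LK : finType := ('I_5 * 'I_6)%type.
Definition LK_adj : rel LK :=
  fun x y => (x != y) && ((x.1 == y.1) || (x.2 == y.2)).

Definition is_LK_edge (E : {set LK}) : bool :=
  [exists u, exists v, LK_adj u v && (E == [set u; v])].
Definition LK_edge : finType := {E : {set LK} | is_LK_edge E}.

Definition Lvert : finType := (LK + LK_edge)%type.
Definition L_adj : rel Lvert :=
  fun x y => match x, y with
  | inl a, inl b => LK_adj a b
  | inl a, inr E => a \in val E
  | inr E, inl a => a \in val E
  | inr _, inr _ => false
  end.

Definition LLbar_adj : rel (Lvert + Lvert)%type :=
  union_rel L_adj (compl_rel L_adj).

(* Main.v *)
Require Import Defs.
From mathcomp Require Import all_boot.
Set Implicit Arguments. Unset Strict Implicit. Unset Printing Implicit Defensive.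

Lemma max_out (T : finType) (e : rel T) S w : irreflexive e -> maximal_stable e S -> w \notin S ->
  exists2 x, x \in S & e w x || e x w.
Proof.
move=> irr [st mx] wS.
case: (boolP [exists x in S, e w x || e x w]) => [/existsP [x /andP [xS h]]|/existsPn H].
  by exists x.
have st' : stable e (w |: S).
  move=> x y; rewrite !in_setU1 => /predU1P [->|xS] /predU1P [->|yS].
  - by rewrite irr.
  - by have := H y; rewrite yS /= negb_or => /andP [].
  - by have := H x; rewrite xS /= negb_or => /andP [].
  - exact: st.
have E := mx _ st' (subsetUr _ _).
by move: wS; rewrite -E setU11.
Qed.

Lemma stable_ext (T : finType) (e1 e2 : rel T) S : e1 =2 e2 -> stable e1 S -> stable e2 S.
Proof. by move=> h st x y xS yS; rewrite -h; apply: st. Qed.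

Lemma triangle_ext (T : finType) (e1 e2 : rel T) : e1 =2 e2 -> triangle e1 -> triangle e2.
Proof.
move=> h tr S [st mx] u v uv uS vS.
have h' : e2 =2 e1 by move=> x y; rewrite h.
have mS : maximal_stable e1 S.
  split; first exact: stable_ext h' st.
  by move=> S' st'; apply: mx; apply: stable_ext h st'.
have uv' : e1 u v by rewrite (h u v).
have [s sS hs] := tr S mS u v uv' uS vS.
by exists s; rewrite // -!h.
Qed.

Lemma compl_irr (T : finType) (e : rel T) : irreflexive (compl_rel e).
Proof. by move=> x; rewrite /compl_rel eqxx. Qed.

Lemma inl_in (T1 T2 : finType) (A : {set T1}) a : (@inl T1 T2 a \in inl @: A) = (a \in A).
Proof. by apply: mem_imset => x y [] . Qed.
Lemma inr_in (T1 T2 : finType) (A : {set T2}) a : (@inr T1 T2 a \in inr @: A) = (a \in A).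
Proof. by apply: mem_imset => x y [] . Qed.
Lemma inr_inl (T1 T2 : finType) (A : {set T1}) a : (@inr T1 T2 a \in inl @: A) = false.
Proof. by apply/imsetP => -[]. Qed.
Lemma inl_inr (T1 T2 : finType) (A : {set T2}) a : (@inl T1 T2 a \in inr @: A) = false.
Proof. by apply/imsetP => -[]. Qed.

Lemma union_tri (T1 T2 : finType) (e1 : rel T1) (e2 : rel T2) :
  triangle e1 -> triangle e2 -> triangle (union_rel e1 e2).
Proof.
move=> t1 t2 S [st mx].
set S1 := [set a | inl a \in S]; set S2 := [set b | inr b \in S].
have m1 : maximal_stable e1 S1.
  split; first by move=> x y; rewrite !inE => xS yS; exact: (st _ _ xS yS).
  move=> S' st' sub.
  have st'' : stable (union_rel e1 e2) (inl @: S' :|: inr @: S2).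
    move=> [x|x] [y|y]; rewrite !in_setU ?inl_in ?inr_in ?inr_inl ?inl_inr //=.
    all: try by apply: st'.
    - by rewrite !orbF; apply: st'.
    - by rewrite /S2 !inE => hx hy; exact: (st _ _ hx hy).
  have E : inl @: S' :|: inr @: S2 = S.
    apply: mx; first exact: st''; apply/subsetP => -[x|x] xS; rewrite in_setU ?inl_in ?inr_in.
      by rewrite (subsetP sub) // inE.
    by rewrite inE xS orbT.
  by apply/setP => x; rewrite inE -E in_setU inl_in inl_inr orbF.
have m2 : maximal_stable e2 S2.
  split; first by move=> x y; rewrite !inE => xS yS; exact: (st _ _ xS yS).
  move=> S' st' sub.
  have st'' : stable (union_rel e1 e2) (inl @: S1 :|: inr @: S').
    move=> [x|x] [y|y]; rewrite !in_setU ?inl_in ?inr_in ?inr_inl ?inl_inr //=.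
    - by rewrite ?orbF /S1 !inE => hx hy; exact: (st _ _ hx hy).
    - by apply: st'.
  have E : inl @: S1 :|: inr @: S' = S.
    apply: mx; first exact: st''; apply/subsetP => -[x|x] xS; rewrite in_setU ?inl_in ?inr_in.
      by rewrite inE xS.
    by rewrite (subsetP sub) ?orbT // inE.
  by apply/setP => x; rewrite inE -E in_setU inr_in inr_inl.
move=> [a|a] [b|b] //= ab aS bS.
  have := t1 S1 m1 a b ab; rewrite /S1 !inE => /(_ aS bS) [s sS hs].
  by exists (inl s) => //; move: sS; rewrite /S1 inE.
have := t2 S2 m2 a b ab; rewrite /S2 !inE => /(_ aS bS) [s sS hs].
by exists (inr s) => //; move: sS; rewrite /S2 inE.
Qed.

Lemma join_half (T1 T2 : finType) (e1 : rel T1) (e2 : rel T2) S a0 :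
  triangle (compl_rel e1) -> (forall x y, compl_rel e1 x y = compl_rel e1 y x) ->
  maximal_stable (compl_rel (union_rel e1 e2)) S -> inl a0 \in S ->
  forall u v, compl_rel (union_rel e1 e2) u v -> u \notin S -> v \notin S ->
  exists2 s, s \in S & compl_rel (union_rel e1 e2) s u && compl_rel (union_rel e1 e2) s v.
Proof.
move=> t1 sym [st mx] a0S.
have noR : forall b, inr b \in S = false.
  move=> b; apply/negbTE/negP => bS.
  by have := st _ _ a0S bS.
set S1 := [set a | inl a \in S].
have m1 : maximal_stable (compl_rel e1) S1.
  split; first by move=> x y; rewrite !inE => xS yS; exact: (st _ _ xS yS).
  move=> S' st' sub.
  have st'' : stable (compl_rel (union_rel e1 e2)) (inl @: S').
    by move=> [x|x] [y|y]; rewrite ?inl_in ?inr_inl //; apply: st'.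
  have E : inl @: S' = S.
    apply: mx; first exact: st''.
    apply/subsetP => -[x|x] xS; last by rewrite noR in xS.
    by rewrite inl_in (subsetP sub) // inE.
  by apply/setP => x; rewrite inE -E inl_in.
have S1E : forall a, (a \in S1) = (inl a \in S) by move=> a; rewrite inE.
move=> [a|a] [b|b] ab aS bS.
- have := t1 S1 m1 a b ab; rewrite !S1E => /(_ aS bS) [s sS hs].
  by exists (inl s); first by rewrite -S1E.
- have aS1 : a \notin S1 by rewrite S1E.
  have [c cS hc] := max_out (@compl_irr _ e1) m1 aS1.
  exists (inl c); first by rewrite -S1E.
  by rewrite andbT; move: hc; rewrite (sym a c) orbb.
- have aS1 : b \notin S1 by rewrite S1E.
  have [c cS hc] := max_out (@compl_irr _ e1) m1 aS1.
  exists (inl c); first by rewrite -S1E.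
  by rewrite /=; move: hc; rewrite (sym b c) orbb.
- by exists (inl a0).
Qed.

Lemma join_half2 (T1 T2 : finType) (e1 : rel T1) (e2 : rel T2) S a0 :
  triangle (compl_rel e2) -> (forall x y, compl_rel e2 x y = compl_rel e2 y x) ->
  maximal_stable (compl_rel (union_rel e1 e2)) S -> inr a0 \in S ->
  forall u v, compl_rel (union_rel e1 e2) u v -> u \notin S -> v \notin S ->
  exists2 s, s \in S & compl_rel (union_rel e1 e2) s u && compl_rel (union_rel e1 e2) s v.
Proof.
move=> t1 sym [st mx] a0S.
have noR : forall b, inl b \in S = false.
  move=> b; apply/negbTE/negP => bS.
  by have := st _ _ a0S bS.
set S1 := [set a | inr a \in S].
have m1 : maximal_stable (compl_rel e2) S1.
  split; first by move=> x y; rewrite !inE => xS yS; exact: (st _ _ xS yS).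
  move=> S' st' sub.
  have st'' : stable (compl_rel (union_rel e1 e2)) (inr @: S').
    by move=> [x|x] [y|y]; rewrite ?inr_in ?inl_inr //; apply: st'.
  have E : inr @: S' = S.
    apply: mx; first exact: st''.
    apply/subsetP => -[x|x] xS; first by rewrite noR in xS.
    by rewrite inr_in (subsetP sub) // inE.
  by apply/setP => x; rewrite inE -E inr_in.
have S1E : forall a, (a \in S1) = (inr a \in S) by move=> a; rewrite inE.
move=> [a|a] [b|b] ab aS bS.
- by exists (inr a0).
- have aS1 : b \notin S1 by rewrite S1E.
  have [c cS hc] := max_out (@compl_irr _ e2) m1 aS1.
  exists (inr c); first by rewrite -S1E.
  by rewrite /=; move: hc; rewrite (sym b c) orbb.
- have aS1 : a \notin S1 by rewrite S1E.
  have [c cS hc] := max_out (@compl_irr _ e2) m1 aS1.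
  exists (inr c); first by rewrite -S1E.
  by rewrite andbT; move: hc; rewrite (sym a c) orbb.
- have := t1 S1 m1 a b ab; rewrite !S1E => /(_ aS bS) [s sS hs].
  by exists (inr s); first by rewrite -S1E.
Qed.

Lemma join_tri (T1 T2 : finType) (e1 : rel T1) (e2 : rel T2) :
  triangle (compl_rel e1) -> (forall x y, compl_rel e1 x y = compl_rel e1 y x) ->
  triangle (compl_rel e2) -> (forall x y, compl_rel e2 x y = compl_rel e2 y x) ->
  triangle (compl_rel (union_rel e1 e2)).
Proof.
move=> t1 s1 t2 s2 S mS u v uv uS vS.
have [[a|a] aS _] := max_out (@compl_irr _ _) mS uS.
  exact: (join_half t1 s1 mS aS uv uS vS).
exact: (join_half2 t2 s2 mS aS uv uS vS).
Qed.

Lemma LK_sym x y : LK_adj x y = LK_adj y x.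
Proof. by rewrite /LK_adj eq_sym (eq_sym x.1) (eq_sym x.2). Qed.

Lemma L_sym x y : L_adj x y = L_adj y x.
Proof. by case: x => [a|E]; case: y => [b|F] //=; rewrite LK_sym. Qed.

Lemma L_irr : irreflexive L_adj.
Proof. by case=> [a|E] //=; rewrite /LK_adj eqxx. Qed.

Lemma edge_set (E : LK_edge) : exists a b, val E = [set a; b] /\ LK_adj a b.
Proof.
case: E => E0 /= /existsP [a /existsP [b /andP [ab /eqP h]]].
by exists a, b.
Qed.

Lemma edge_pair (E : LK_edge) c d : c \in val E -> d \in val E -> c != d -> LK_adj c d.
Proof.
have [a [b [-> ab]]] := edge_set E.
rewrite !in_set2 => /orP [] /eqP -> /orP [] /eqP ->; rewrite ?eqxx //.
by rewrite LK_sym.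
Qed.

Lemma edge_other (E : LK_edge) a : a \in val E -> exists c, val E = [set a; c] /\ LK_adj a c.
Proof.
have [a' [b [-> ab]]] := edge_set E.
rewrite in_set2 => /orP [] /eqP ->; first by exists b.
by exists a'; rewrite setUC LK_sym.
Qed.

Lemma card_edge (E : LK_edge) : #|val E| <= 2.
Proof. by have [a [b [-> _]]] := edge_set E; rewrite cards2; case: (a != b). Qed.

Lemma L_tri_mixed (S : {set Lvert}) (a : LK) (E : LK_edge) : maximal_stable L_adj S -> a \in val E ->
  inl a \notin S -> inr E \notin S ->
  exists2 s, s \in S & L_adj s (inl a) && L_adj s (inr E).
Proof.
move=> mS aE aS ES.
have [c [Ee ac]] := edge_other aE.
case cS: (inl c \in S).
  exists (inl c) => //=; rewrite LK_sym ac Ee !inE eqxx orbT //.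
have [[d|F] dS hd] := max_out L_irr mS ES; last by [].
move: hd; rewrite /= orbb Ee in_set2 => /orP [] /eqP dE; subst d.
  by rewrite dS in aS.
by rewrite dS in cS.
Qed.

Lemma L_tri : triangle L_adj.
Proof.
move=> S mS [a|E] [b|F] //= ab aS bS.
- have hE : is_LK_edge [set a; b].
    by apply/existsP; exists a; apply/existsP; exists b; rewrite ab eqxx.
  set w : Lvert := inr (exist _ [set a; b] hE).
  case wS: (w \in S).
    by exists w => //=; rewrite !inE !eqxx orbT.
  have [[c|F] cS hc] := max_out L_irr mS (negbT wS); last by [].
  move: hc; rewrite /= orbb !inE => /orP [] /eqP cE; subst c.
    by rewrite cS in aS.
  by rewrite cS in bS.
- exact: L_tri_mixed.
- have [s sS hs] := L_tri_mixed mS ab bS aS.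
  by exists s; rewrite // andbC.
Qed.

Lemma count_free n (P Q : {set 'I_n}) : #|P| <= 2 -> #|Q| <= 2 -> 4 < n ->
  exists l, (l \notin P) && (l \notin Q).
Proof.
move=> hP hQ hn.
have h1 : #|P :|: Q| < #|'I_n|.
  rewrite card_ord; apply: leq_ltn_trans (leq_card_setU _ _) _.
  by apply: leq_ltn_trans hn; rewrite (leq_add hP hQ).
have : 0 < #|~: (P :|: Q)|.
  by move: h1; rewrite -(cardsC (P :|: Q)); case: #|~: _| => //; rewrite addn0 ltnn.
rewrite card_gt0 => /set0Pn [l]; rewrite !inE negb_or => h.
by exists l.
Qed.

Lemma bad_inr n (f : 'I_n -> LK) (E : LK_edge) : injective f ->
  #|[set l | f l \in val E]| <= 2.
Proof.
move=> inj; rewrite -(card_imset _ inj).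
apply: leq_trans (card_edge E).
by apply: subset_leq_card; apply/subsetP => x /imsetP [l]; rewrite inE => h ->.
Qed.

Definition Lv (x : LK) : Lvert := inl x.

Lemma bad_row (S : {set Lvert}) i w : (forall l, Lv (i, l) \in S) -> w \notin S ->
  #|[set l : 'I_6 | L_adj (Lv (i, l)) w]| <= 2.
Proof.
move=> full wS; case: w wS => [[k m]|E] wS.
  case ki: (k == i).
    by move/eqP: ki => ki; subst k; rewrite full in wS.
  apply: leq_trans (_ : #|[set m]| <= 2); last by rewrite cards1.
  apply: subset_leq_card; apply/subsetP => l; rewrite !inE /= /LK_adj /= (eq_sym i k) ki /=.
  by case/andP.
have := @bad_inr 6 (fun l => (i, l)) E (fun l l' h => congr1 snd h); rewrite ?/injective.
apply: leq_trans; apply: eq_leq; congr (#|_|); apply/setP => l; rewrite !inE.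
Qed.

Lemma bad_col (S : {set Lvert}) j w : (forall l, Lv (l, j) \in S) -> w \notin S ->
  #|[set l : 'I_5 | L_adj (Lv (l, j)) w]| <= 2.
Proof.
move=> full wS; case: w wS => [[k m]|E] wS.
  case mj: (m == j).
    by move/eqP: mj => mj; subst m; rewrite full in wS.
  apply: leq_trans (_ : #|[set k]| <= 2); last by rewrite cards1.
  apply: subset_leq_card; apply/subsetP => l; rewrite !inE /= /LK_adj /= (eq_sym j) mj orbF.
  by case/andP.
have := @bad_inr 5 (fun l => (l, j)) E (fun l l' h => congr1 fst h); rewrite ?/injective.
apply: leq_trans; apply: eq_leq; congr (#|_|); apply/setP => l; rewrite !inE.
Qed.

Lemma Lc_tri : triangle (compl_rel L_adj).
Proof.
move=> S mS u v uv uS vS.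
have csym : forall x y, compl_rel L_adj x y = compl_rel L_adj y x.
  by move=> x y; rewrite /compl_rel eq_sym L_sym.
have out : forall w, w \notin S -> exists2 x, x \in S & (w != x) && ~~ L_adj w x.
  move=> w wS; have [x xS h] := max_out (@compl_irr _ _) mS wS.
  by exists x => //; move: h; rewrite (csym x w) orbb.
have cl : forall x y, x \in S -> y \in S -> (x == y) || L_adj x y.
  move=> x y xS yS; have := (proj1 mS) x y xS yS.
  by rewrite /compl_rel negb_and !negbK.
have goal_s : forall s, s \in S -> ~~ L_adj s u -> ~~ L_adj s v ->
    exists2 s, s \in S & compl_rel L_adj s u && compl_rel L_adj s v.
  move=> s sS h1 h2; exists s => //; rewrite /compl_rel h1 h2 !andbT.
  apply/andP; split; apply/eqP => e; subst s.
    by rewrite sS in uS.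
  by rewrite sS in vS.
case: (boolP [exists F, inr F \in S]) => [/existsP [E ES] | /existsPn noR].
  have key : forall w, w \notin S -> ~~ L_adj (inr E) w.
    move=> [c|F] wS //; apply/negP => /= cE.
    have [[d|F] dS /andP [nx nadj]] := out _ wS.
      have := cl _ _ ES dS; rewrite /= => dE.
      have cd : c != d by [].
      by move: nadj; rewrite /= (edge_pair cE dE cd).
    have := cl _ _ ES dS; rewrite orbF => /eqP [] FE; subst F.
    by rewrite /= cE in nadj.
  by apply: (goal_s (inr E)) => //; apply: key.
have [[[i j]|F] x0S _] := out u uS; last by have := noR F; rewrite x0S.
have clLK : forall k m k' m', Lv (k, m) \in S -> Lv (k', m') \in S ->
    ((k, m) == (k', m')) || LK_adj (k, m) (k', m').
  by move=> k m k' m' h1 h2; exact: (cl _ _ h1 h2).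
case: (boolP [exists k, exists m, (Lv (k, m) \in S) && (k != i)]).
  move=> /existsP [k /existsP [m /andP [kmS ki]]].
  have mj : m = j.
    have := clLK _ _ _ _ kmS x0S; rewrite /LK_adj /= xpair_eqE (negbTE ki) /=.
    by move/eqP.
  subst m.
  have full : forall l, Lv (l, j) \in S.
    move=> l; apply/negPn/negP => lS.
    have [[[k' m']|F] xS /andP [nx nadj]] := out _ lS; last by have := noR F; rewrite xS.
    case mj: (m' == j).
      by move/eqP: mj nx nadj => ->; rewrite /= /LK_adj /= eqxx orbT andbT => ->.
    have k'i : k' = i.
      have := clLK _ _ _ _ xS x0S; rewrite /LK_adj /= xpair_eqE mj andbF orbF /=.
      by move/eqP.
    subst k'.
    have := clLK _ _ _ _ kmS xS; rewrite /LK_adj /= xpair_eqE (negbTE ki) /=.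
    by rewrite eq_sym mj.
  have [l /andP [lu lv]] := count_free (bad_col full uS) (bad_col full vS) (isT : 4 < 5).
  by apply: (goal_s (Lv (l, j))); rewrite ?full //; move: lu lv; rewrite !inE.
move=> /existsPn H1.
have full : forall l, Lv (i, l) \in S.
  move=> l; apply/negPn/negP => lS.
  have [[[k' m']|F] xS /andP [nx nadj]] := out _ lS; last by have := noR F; rewrite xS.
  have := H1 k'; move/existsPn/(_ m'); rewrite xS /= negbK => /eqP k'i; subst k'.
  move: nx nadj; rewrite /= /LK_adj /= eqxx /= => -> //.
have [l /andP [lu lv]] := count_free (bad_row full uS) (bad_row full vS) (isT : 4 < 6).
by apply: (goal_s (Lv (i, l))); rewrite ?full //; move: lu lv; rewrite !inE.
Qed.

Theorem proposition39 : cap_triangle LLbar_adj.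
Proof.
split.
  exact: union_tri L_tri Lc_tri.
apply: join_tri.
- exact: Lc_tri.
- by move=> x y; rewrite /compl_rel eq_sym L_sym.
- apply: triangle_ext L_tri => x y; rewrite /compl_rel.
  case: (eqVneq x y) => [->|xy] /=; first by rewrite L_irr.
  by rewrite negbK.
- by move=> x y; rewrite /compl_rel eq_sym /compl_rel eq_sym L_sym.
Qed.
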